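(* $$\sum_{n=1}^\infty \frac{H_n \binom{2n}{n}}{(2n-1)^2\, 2^{2n}} = \pi(1-\log 2) - 4(1-G),$$ where $G$ is Catalan's constant.
   Context: $H_n=\sum_{k=1}^n \frac{1}{k}$ denotes the $n$-th harmonic number and $\binom{2n}{n}$ the central binomial coefficient; $G=\sum_{n=0}^\infty \frac{(-1)^n}{(2n+1)^2}$ is Catalan's constant; $\log$ is the natural logarithm. *)

(* Defs.v *)
From Stdlib Require Import Reals.
From Coquelicot Require Import Coquelicot.
Open Scope R_scope.

Definition harmonic (n : nat) : R :=
  sum_n_m (fun k : nat => / INR k) 1 n.

Definition central_binom (n : nat) : R := Binomial.C (2 * n) n.

Definition catalan_term (n : nat) : R := (-1) ^ n / (INR (2 * n + 1)) ^ 2.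
Definition Catalan : R := Series catalan_term.

(* summand of the main series, indexed from n = 1 *)
Definition main_term (n : nat) : R :=
  harmonic n * central_binom n / ((2 * INR n - 1) ^ 2 * 2 ^ (2 * n)).

(* Main.v *)
Require Import Defs.
From Stdlib Require Import Reals.
From Coquelicot Require Import Coquelicot.
Open Scope R_scope.
From Stdlib Require Import Lra Lia Psatz Factorial.
Fixpoint sumf (a : nat -> R -> R) (N : nat) (x : R) : R :=
  match N with O => 0 | S k => sumf a k x + a k x end.

Lemma sumf_der (a da : nat -> R -> R) N x :
  (forall k, is_derive (a k) x (da k x)) -> is_derive (sumf a N) x (sumf da N x).
Proof.
  intros H. induction N; simpl.
  - apply (is_derive_ext (fun _ => 0)). reflexivity.
    apply is_derive_Reals, derivable_pt_lim_const.
  - apply (is_derive_ext (fun y => sumf a N y + a N y)). reflexivity.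
    apply is_derive_Reals. apply derivable_pt_lim_plus; apply is_derive_Reals; auto.
Qed.

Lemma sumf_ext (a b : nat -> R -> R) N x :
  (forall k, (k < N)%nat -> a k x = b k x) -> sumf a N x = sumf b N x.
Proof.
  intros H. induction N; simpl; auto.
  rewrite IHN, H; auto.
Qed.

Lemma der_pow n (x : R) : is_derive (fun y => y ^ n) x (INR n * x ^ pred n).
Proof. apply is_derive_Reals, derivable_pt_lim_pow. Qed.

Lemma der_mono (k : R) n (x : R) : is_derive (fun y => k * y ^ n) x (k * (INR n * x ^ pred n)).
Proof. apply is_derive_scal, der_pow. Qed.
Lemma cmp (f g f' g' : R -> R) a b : a <= b ->
  (forall x, a <= x <= b -> is_derive f x (f' x)) ->
  (forall x, a <= x <= b -> is_derive g x (g' x)) ->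
  (forall x, a < x < b -> f' x <= g' x) -> f b - f a <= g b - g a.
Proof.
  intros Hab Hf Hg Hle.
  destruct (Req_dec a b) as [->|Hne]. lra.
  destruct (MVT_cor2 (fun x => g x - f x) (fun x => g' x - f' x) a b) as [c [Hc1 Hc2]].
  lra.
  intros x Hx. apply is_derive_Reals. apply (is_derive_minus g f); auto.
  specialize (Hle c Hc2). nra.
Qed.

Lemma bnd (f f' : R -> R) a b e : a <= b ->
  (forall x, a <= x <= b -> is_derive f x (f' x)) ->
  (forall x, a < x < b -> Rabs (f' x) <= e) -> Rabs (f b - f a) <= e * (b - a).
Proof.
  intros Hab Hf He.
  assert (H1 := cmp f (fun x => e * x) f' (fun _ => e) a b Hab Hf).
  assert (H2 := cmp (fun x => - e * x) f (fun _ => - e) f' a b Hab).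
  apply Rabs_le. split.
  - enough (- e * b - - e * a <= f b - f a) by lra.
    apply H2; auto.
    intros x _. auto_derive; auto; ring.
    intros x Hx. specialize (He x Hx). apply Rabs_le_between in He. lra.
  - enough (f b - f a <= e * b - e * a) by lra.
    apply H1; auto.
    intros x _. auto_derive; auto; ring.
    intros x Hx. specialize (He x Hx). apply Rabs_le_between in He. lra.
Qed.
Definition c (n : nat) : R := central_binom n / 2 ^ (2 * n).

Lemma c0 : c 0 = 1.
Proof. unfold c, central_binom, Binomial.C. simpl. field. Qed.

Lemma c_rec n : INR (2 * n + 2) * c (S n) = INR (2 * n + 1) * c n.
Proof.
  unfold c, central_binom, Binomial.C.
  replace (2 * S n)%nat with (S (S (2 * n))) by lia.
  replace (S (S (2 * n)) - S n)%nat with (S n) by lia.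
  replace (2 * n - n)%nat with n by lia.
  replace (fact (S (S (2 * n)))) with (S (S (2 * n)) * (S (2 * n) * fact (2 * n)))%nat by reflexivity.
  replace (fact (S n)) with (S n * fact n)%nat by reflexivity.
  rewrite !mult_INR.
  replace (2 ^ S (S (2 * n))) with (4 * 2 ^ (2 * n)) by (simpl; ring).
  replace (INR (2 * n + 2)) with (INR (S (S (2 * n)))) by (f_equal; lia).
  replace (INR (2 * n + 1)) with (INR (S (2 * n))) by (f_equal; lia).
  rewrite !S_INR, mult_INR.
  assert (INR (fact n) <> 0) by apply INR_fact_neq_0.
  assert (INR (fact (2*n)) <> 0) by apply INR_fact_neq_0.
  assert (2 ^ (2 * n) <> 0) by (apply pow_nonzero; lra).
  assert (0 <= INR n) by apply pos_INR.
  simpl. field. repeat split; auto; lra.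
Qed.

Lemma c_pos n : 0 < c n.
Proof.
  unfold c, central_binom, Binomial.C. apply Rdiv_lt_0_compat.
  apply Rdiv_lt_0_compat. apply lt_0_INR, lt_O_fact.
  apply Rmult_lt_0_compat; apply lt_0_INR, lt_O_fact.
  apply pow_lt; lra.
Qed.

Lemma c_rec' n : 2 * INR (S n) * c (S n) = INR (2 * n + 1) * c n.
Proof. rewrite <- c_rec. replace (INR (2*n+2)) with (2 * INR (S n)). ring.
  replace (2*n+2)%nat with (2*(S n))%nat by lia. rewrite mult_INR. simpl. ring. Qed.

Lemma c_sq n : c n ^ 2 * INR (2 * n + 1) <= 1.
Proof.
  induction n.
  - rewrite c0. simpl. lra.
  - assert (H := c_rec n).
    assert (Hp := pos_INR n).
    replace (INR (2 * n + 2)) with (2 * INR n + 2) in H by (rewrite plus_INR, mult_INR; simpl; ring).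
    replace (INR (2 * n + 1)) with (2 * INR n + 1) in H, IHn by (rewrite plus_INR, mult_INR; simpl; ring).
    replace (INR (2 * S n + 1)) with (2 * INR n + 3) by (replace (2 * S n + 1)%nat with (S (S (S (2*n)))) by lia; rewrite !S_INR, mult_INR; simpl; ring).
    assert (Hc : c (S n) = (2 * INR n + 1) * c n / (2 * INR n + 2)) by (rewrite <- H; field; lra).
    rewrite Hc.
    assert (0 < c n) by apply c_pos.
    apply Rle_trans with (c n ^ 2 * (2 * INR n + 1)); auto.
    unfold Rdiv. 
    assert (0 < 2 * INR n + 2) by lra.
    apply Rmult_le_reg_r with ((2 * INR n + 2)^2). nra.
    replace (((2 * INR n + 1) * c n * / (2 * INR n + 2)) ^ 2 * (2 * INR n + 3) * (2 * INR n + 2) ^ 2)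
      with ((2 * INR n + 1) ^ 2 * c n ^ 2 * (2 * INR n + 3)) by (field; lra).
    nra.
Qed.

Lemma sumf_S a N x : sumf a (S N) x = sumf a N x + a N x.
Proof. reflexivity. Qed.

Lemma INR2 n : INR (2 * n) = 2 * INR n.
Proof. rewrite mult_INR. simpl. ring. Qed.
Lemma INR21 n : INR (2 * n + 1) = 2 * INR n + 1.
Proof. rewrite plus_INR, mult_INR. simpl. ring. Qed.
Lemma INR22 n : INR (2 * n + 2) = 2 * INR n + 2.
Proof. rewrite plus_INR, mult_INR. simpl. ring. Qed.

Definition Qp N x := sumf (fun k y => c k * y ^ (2 * k)) N x.
Definition dQ k y := c k * (INR (2 * k) * y ^ pred (2 * k)).

Lemma Qp_der N (x : R) : is_derive (Qp N) x (sumf dQ N x).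
Proof. apply sumf_der. intros k. apply der_mono. Qed.

Lemma c1 : c 1 = /2.
Proof. assert (H := c_rec' 0). rewrite c0 in H. simpl in H. lra. Qed.

Lemma Q_id n x : (1 - x^2) * sumf dQ (S n) x - x * Qp (S n) x = - (2 * INR (S n) * c (S n) * x ^ (2 * n + 1)).
Proof.
  unfold Qp. induction n.
  - simpl. unfold dQ. rewrite c0, c1. simpl. field.
  - rewrite (sumf_S dQ (S n)), (sumf_S _ (S n)).
    unfold dQ at 2.
    replace (pred (2 * S n)) with (2 * n + 1)%nat by lia.
    replace (x ^ (2 * S n)) with (x ^ (2 * n + 1) * x) by (replace (2 * S n)%nat with (2 * n + 1 + 1)%nat by lia; rewrite (pow_add x (2*n+1) 1); ring).
    replace (2 * S n + 1)%nat with (2 * n + 1 + 2)%nat by lia.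
    rewrite (pow_add x (2*n+1) 2).
    assert (H := c_rec' (S n)).
    replace (INR (2 * S n + 1)) with (2 * INR (S n) + 1) in H by (rewrite INR21; auto).
    rewrite H, INR2. nra.
Qed.

Lemma der_ext (f g : R -> R) (x l : R) : (forall t : R, f t = g t) -> is_derive f x l -> is_derive g x l.
Proof. intros. eapply is_derive_ext; eauto. Qed.

Lemma is_derive_eq (f : R -> R) (x l l' : R) : is_derive f x l -> l = l' -> is_derive f x l'.
Proof. intros H ->; auto. Qed.

Lemma der_mono' (k d : R) n (x : R) : is_derive (fun y => k * y ^ n / d) x (k * (INR n * x ^ pred n) / d).
Proof.
  apply (der_ext (fun y => (k / d) * y ^ n)).
  { intros; unfold Rdiv; ring. }
  eapply is_derive_eq. apply der_mono. unfold Rdiv; ring.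
Qed.

Lemma INR21_pos n : 0 < INR (2 * n + 1).
Proof. apply lt_0_INR. lia. Qed.

Definition A N x := sumf (fun k y => c k * y ^ (2 * k + 1) / INR (2 * k + 1)) N x.

Lemma A_der N (x : R) : is_derive (A N) x (Qp N x).
Proof.
  apply sumf_der. intros k. eapply is_derive_eq. apply der_mono'.
  replace (pred (2 * k + 1)) with (2 * k)%nat by lia.
  assert (H := INR21_pos k). field. lra.
Qed.

Definition bb k := c (S k) / INR (2 * k + 1) ^ 2.
Definition Gp N x := sumf (fun k y => bb k * y ^ (2 * k + 2)) N x.

Lemma Gp_der N (x : R) : is_derive (Gp N) x (A N x).
Proof.
  apply sumf_der. intros k. eapply is_derive_eq. apply der_mono.
  replace (pred (2 * k + 2)) with (2 * k + 1)%nat by lia.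
  unfold bb. assert (H := c_rec k). assert (H1 := INR21_pos k).
  apply (Rmult_eq_reg_r (INR (2 * k + 1) ^ 2)). 2: nra.
  field_simplify; try lra.
  rewrite (Rmult_comm (c (S k))), H. ring.
Qed.

Definition hpx m x := sumf (fun j y => y ^ (2 * j + 2) / INR (j + 1)) m x.
Definition hpd m x := sumf (fun j y => 2 * y ^ (2 * j + 1)) m x.

Lemma hpx_der m (x : R) : is_derive (hpx m) x (hpd m x).
Proof.
  apply sumf_der. intros k.
  apply (der_ext (fun y => 1 * y ^ (2 * k + 2) / INR (k + 1))). { intros t; cbv beta; unfold Rdiv; ring. }
  eapply is_derive_eq.
  apply (der_mono' 1 (INR (k+1)) (2 * k + 2)).
  replace (pred (2 * k + 2)) with (2 * k + 1)%nat by lia.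
  rewrite INR22. replace (INR (k+1)) with (INR k + 1) by (rewrite plus_INR; simpl; ring).
  assert (H := pos_INR k). field. lra.
Qed.

Lemma hp_id m x : (1 - x ^ 2) * hpd m x = 2 * x * (1 - x ^ (2 * m)).
Proof.
  unfold hpd. induction m.
  - simpl. ring.
  - rewrite sumf_S.
    replace (2 * S m)%nat with (2 * m + 2)%nat by lia.
    rewrite (pow_add x (2*m) 2), (pow_add x (2*m) 1). nra.
Qed.

Lemma hpx_one m : hpx m 1 = harmonic m.
Proof.
  unfold hpx, harmonic. induction m.
  - simpl. rewrite sum_n_m_zero; auto.
  - rewrite sumf_S, sum_n_Sm by lia. rewrite IHm, pow1.
    replace (m+1)%nat with (S m) by lia. unfold plus; simpl. unfold Rdiv. ring.
Qed.

Lemma hpx_zero m : hpx m 0 = 0.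
Proof.
  unfold hpx. induction m. reflexivity.
  rewrite sumf_S, IHm. replace (2 * m + 2)%nat with (S (2 * m + 1)) by lia.
  simpl. field. apply not_0_INR. lia.
Qed.

Definition F N x := sumf (fun k y => bb k * hpx (S k) y) N x.
Definition Fd N x := sumf (fun k y => bb k * hpd (S k) y) N x.

Lemma F_der N (x : R) : is_derive (F N) x (Fd N x).
Proof. apply sumf_der. intros k. apply is_derive_scal, hpx_der. Qed.

Lemma F_id N x : (1 - x ^ 2) * Fd N x = 2 * x * (Gp N 1 - Gp N x).
Proof.
  unfold Fd, Gp. induction N.
  - simpl. ring.
  - rewrite !sumf_S.
    replace (1 ^ (2 * N + 2)) with 1 by (rewrite pow1; auto).
    assert (H := hp_id (S N) x).
    replace (2 * S N)%nat with (2 * N + 2)%nat in H by lia.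
    rewrite Rmult_plus_distr_l, IHN.
    replace ((1 - x^2) * (bb N * hpd (S N) x)) with (bb N * ((1 - x^2) * hpd (S N) x)) by ring.
    rewrite H. ring.
Qed.

Lemma F_zero N : F N 0 = 0.
Proof. unfold F. induction N. reflexivity. rewrite sumf_S, IHN, hpx_zero. ring. Qed.

Definition pa M x := sumf (fun n y => (-1) ^ n * y ^ (2 * n) / INR (2 * n + 1)) M x.
Definition pk M x := sumf (fun n y => (-1) ^ n * y ^ (2 * n + 1) / INR (2 * n + 1) ^ 2) M x.
Definition Pp M x := sumf (fun n y => (-1) ^ n * y ^ (2 * n + 1) / INR (2 * n + 1)) M x.
Definition pg M x := sumf (fun n y => (-1) ^ n * y ^ (2 * n)) M x.

Lemma pk_der M (x : R) : is_derive (pk M) x (pa M x).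
Proof.
  apply sumf_der. intros k. eapply is_derive_eq. apply der_mono'.
  replace (pred (2 * k + 1)) with (2 * k)%nat by lia.
  assert (H := INR21_pos k). field. lra.
Qed.

Lemma Pp_der M (x : R) : is_derive (Pp M) x (pg M x).
Proof.
  apply sumf_der. intros k. eapply is_derive_eq. apply der_mono'.
  replace (pred (2 * k + 1)) with (2 * k)%nat by lia.
  assert (H := INR21_pos k). field. lra.
Qed.

Lemma Pp_pa M x : Pp M x = x * pa M x.
Proof.
  unfold Pp, pa. induction M. simpl; ring.
  rewrite !sumf_S, IHM. rewrite (pow_add x (2*M) 1). assert (H := INR21_pos M). field. lra.
Qed.

Lemma pg_id M x : (1 + x ^ 2) * pg M x = 1 - (-1) ^ M * x ^ (2 * M).
Proof.
  unfold pg. induction M.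
  - simpl. ring.
  - rewrite sumf_S. replace (2 * S M)%nat with (2 * M + 2)%nat by lia.
    rewrite (pow_add x (2*M) 2). simpl ((-1) ^ S M). nra.
Qed.

Lemma pk_zero M : pk M 0 = 0.
Proof.
  unfold pk. induction M. reflexivity.
  rewrite sumf_S, IHM, pow_i by lia. unfold Rdiv; ring.
Qed.

Lemma pk_one m : pk (S m) 1 = sum_n catalan_term m.
Proof.
  unfold pk. induction m.
  - rewrite sum_O. simpl. unfold catalan_term. simpl. field.
  - rewrite sumf_S, IHm, sum_Sn. unfold catalan_term. rewrite pow1. unfold plus; simpl. unfold Rdiv; ring.
Qed.

Lemma F_one m : F (S m) 1 = sum_n (fun k => main_term (S k)) m.
Proof.
  assert (Ht : forall k, bb k * hpx (S k) 1 = main_term (S k)).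
  { intros k. rewrite hpx_one. unfold bb, main_term, c.
    replace (2 * INR (S k) - 1) with (INR (2 * k + 1)) by (rewrite INR21, S_INR; ring).
    assert (H := INR21_pos k). assert (2 ^ (2 * S k) <> 0) by (apply pow_nonzero; lra).
    field. split; auto; lra. }
  unfold F. induction m.
  - rewrite sum_O. simpl. rewrite <- Ht. ring.
  - rewrite sumf_S, IHm, sum_Sn, Ht. reflexivity.
Qed.

Lemma der_mult (f g : R -> R) (x df dg : R) : is_derive f x df -> is_derive g x dg ->
  is_derive (fun y => f y * g y) x (df * g x + f x * dg).
Proof. intros H1 H2. apply is_derive_Reals. apply (derivable_pt_lim_mult f g); apply is_derive_Reals; auto. Qed.

Lemma der_plus (f g : R -> R) (x df dg : R) : is_derive f x df -> is_derive g x dg ->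
  is_derive (fun y => f y + g y) x (df + dg).
Proof. intros H1 H2. apply is_derive_Reals. apply (derivable_pt_lim_plus f g); apply is_derive_Reals; auto. Qed.

Lemma der_minus (f g : R -> R) (x df dg : R) : is_derive f x df -> is_derive g x dg ->
  is_derive (fun y => f y - g y) x (df - dg).
Proof. intros H1 H2. apply is_derive_Reals. apply (derivable_pt_lim_minus f g); apply is_derive_Reals; auto. Qed.

Lemma der_sin (x : R) : is_derive sin x (cos x).
Proof. apply is_derive_Reals, derivable_pt_lim_sin. Qed.
Lemma der_cos (x : R) : is_derive cos x (- sin x).
Proof. apply is_derive_Reals, derivable_pt_lim_cos. Qed.
Lemma der_id (x : R) : is_derive (fun y => y) x 1.
Proof. apply is_derive_Reals, derivable_pt_lim_id. Qed.
Lemma der_const (a x : R) : is_derive (fun _ => a) x 0.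
Proof. apply is_derive_Reals, derivable_pt_lim_const. Qed.

Lemma der_comp (f g : R -> R) (x df dg : R) : is_derive f (g x) df -> is_derive g x dg ->
  is_derive (fun y => f (g y)) x (dg * df).
Proof. intros H1 H2. apply (is_derive_comp f g); auto. Qed.

Lemma der_sin_comp (f df : R -> R) (w : R) : is_derive f (sin w) (df (sin w)) ->
  is_derive (fun x => f (sin x)) w (cos w * df (sin w)).
Proof. intros H. apply der_comp; auto. apply der_sin. Qed.

Lemma A_zero N : A N 0 = 0.
Proof. unfold A. induction N. reflexivity. rewrite sumf_S, IHN, pow_i by lia. unfold Rdiv; ring. Qed.

Lemma Qp_zero n : Qp (S n) 0 = 1.
Proof. unfold Qp. induction n. simpl. rewrite c0. ring.
  rewrite sumf_S, IHn, pow_i by lia. ring. Qed.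

Lemma Gp_zero N : Gp N 0 = 0.
Proof. unfold Gp. induction N. reflexivity. rewrite sumf_S, IHN, pow_i by lia. ring. Qed.

Lemma L_ineq w : 0 <= w <= PI / 2 -> (PI / 2 - w) * sin w <= cos w.
Proof.
  intros Hw.
  assert (H := cmp (fun x => cos x - (PI / 2 - x) * sin x) (fun _ => 0)
     (fun x => - (PI / 2 - x) * cos x) (fun _ => 0) w (PI / 2)).
  cbv beta in H. rewrite cos_PI2, sin_PI2 in H.
  enough (0 - (PI / 2 - PI / 2) * 1 - (cos w - (PI / 2 - w) * sin w) <= 0 - 0) by lra.
  apply H. lra.
  - intros x _. eapply is_derive_eq. apply der_minus. apply der_cos.
    apply der_mult. apply der_minus. apply der_const. apply der_id. apply der_sin. ring.
  - intros x _. apply der_const.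
  - intros x Hx. assert (0 <= cos x) by (apply cos_ge_0; lra). nra.
Qed.

Lemma sc2 x : cos x * cos x = 1 - sin x ^ 2.
Proof. assert (H := sin2_cos2 x). unfold Rsqr in H. simpl. lra. Qed.

Definition q n w := cos w * Qp (S n) (sin w).

Lemma q_der n (w : R) : is_derive (q n) w (- (2 * INR (S n) * c (S n) * sin w ^ (2 * n + 1))).
Proof.
  eapply is_derive_eq. apply der_mult. apply der_cos.
  apply (der_sin_comp (Qp (S n)) (sumf dQ (S n))). apply Qp_der.
  assert (H := Q_id n (sin w)).
  replace (cos w * (cos w * sumf dQ (S n) (sin w))) with ((1 - sin w ^ 2) * sumf dQ (S n) (sin w))
    by (rewrite <- sc2; ring).
  lra.
Qed.

Definition e n w := w - A (S n) (sin w).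

Lemma e_der n (w : R) : is_derive (e n) w (1 - q n w).
Proof.
  eapply is_derive_eq. apply der_minus. apply der_id.
  apply (der_sin_comp (A (S n)) (Qp (S n))). apply A_der.
  unfold q; ring.
Qed.

Lemma q_zero n : q n 0 = 1.
Proof. unfold q. rewrite sin_0, cos_0, Qp_zero. ring. Qed.

Lemma e_zero n : e n 0 = 0.
Proof. unfold e. rewrite sin_0, A_zero. ring. Qed.

Lemma q_le1 n w : 0 <= w <= PI / 2 -> q n w <= 1.
Proof.
  intros Hw.
  assert (H := cmp (q n) (fun _ => 0) _ (fun _ => 0) 0 w (proj1 Hw) (fun x _ => q_der n x)).
  cbv beta in H. rewrite q_zero in H.
  enough (q n w - 1 <= 0 - 0) by lra.
  apply H.
  - intros x _. apply der_const.
  - intros x Hx. assert (0 <= sin x) by (apply sin_ge_0; lra).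
    assert (0 < c (S n)) by apply c_pos. assert (0 <= INR (S n)) by apply pos_INR.
    assert (0 <= sin x ^ (2 * n + 1)) by (apply pow_le; auto).
    assert (0 <= INR (S n) * c (S n) * sin x ^ (2 * n + 1)).
    { apply Rmult_le_pos; auto. apply Rmult_le_pos; lra. }
    lra.
Qed.

Lemma e_bounds n w : 0 <= w <= PI / 2 -> 0 <= e n w <= e n (PI / 2).
Proof.
  intros Hw. split.
  - assert (H := cmp (fun _ => 0) (e n) (fun _ => 0) _ 0 w (proj1 Hw) (fun x _ => der_const 0 x) (fun x _ => e_der n x)).
    cbv beta in H. rewrite e_zero in H.
    enough (0 - 0 <= e n w - 0) by lra.
    apply H. intros x Hx. assert (q n x <= 1) by (apply q_le1; lra). lra.
  - assert (H := cmp (fun _ => 0) (e n) (fun _ => 0) _ w (PI / 2) (proj2 Hw) (fun x _ => der_const 0 x) (fun x _ => e_der n x)).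
    cbv beta in H.
    enough (0 - 0 <= e n (PI / 2) - e n w) by lra.
    apply H. intros x Hx. assert (q n x <= 1) by (apply q_le1; lra). lra.
Qed.

Lemma alpha_le n : e n (PI / 2) <= c n.
Proof.
  assert (H := cmp (fun w => e n w + (PI / 2 - w) * (1 - q n w)) (fun w => c n * sin w ^ (2 * n + 1))
     (fun w => (PI / 2 - w) * (2 * INR (S n) * c (S n) * sin w ^ (2 * n + 1)))
     (fun w => cos w * (c n * (INR (2 * n + 1) * sin w ^ pred (2 * n + 1)))) 0 (PI / 2)).
  cbv beta in H. rewrite q_zero, e_zero, sin_0, sin_PI2, pow1, pow_i in H by lia.
  enough (e n (PI / 2) + (PI / 2 - PI / 2) * (1 - q n (PI / 2)) - (0 + (PI / 2 - 0) * (1 - 1)) <= c n * 1 - c n * 0) by lra.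
  apply H.
  - assert (PI > 0) by apply PI_RGT_0. lra.
  - intros x _. eapply is_derive_eq. apply der_plus. apply e_der.
    apply der_mult. apply der_minus. apply der_const. apply der_id.
    apply der_minus. apply der_const. apply q_der. cbv beta; ring.
  - intros x _. apply (der_sin_comp (fun y => c n * y ^ (2 * n + 1)) (fun y => c n * (INR (2 * n + 1) * y ^ pred (2 * n + 1)))). apply der_mono.
  - intros x Hx.
    replace (pred (2 * n + 1)) with (2 * n)%nat by lia.
    rewrite c_rec'. rewrite (pow_add (sin x) (2 * n) 1), pow_1.
    assert (Hl := L_ineq x ltac:(lra)).
    assert (0 <= sin x) by (apply sin_ge_0; lra).
    assert (0 < c n) by apply c_pos. assert (0 < INR (2 * n + 1)) by apply INR21_pos.
    assert (0 <= sin x ^ (2 * n)) by (apply pow_le; auto).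
    assert (0 <= INR (2 * n + 1) * c n * sin x ^ (2 * n)) by (apply Rmult_le_pos; auto; apply Rmult_le_pos; lra).
    nra.
Qed.

Definition r N t := cos t + t * sin t - 1 - Gp N (sin t).

Lemma r_der N (t : R) : is_derive (r N) t (cos t * (t - A N (sin t))).
Proof.
  eapply is_derive_eq. apply der_minus. apply der_minus. apply der_plus. apply der_cos.
  apply der_mult. apply der_id. apply der_sin. apply der_const.
  apply (der_sin_comp (Gp N) (A N)). apply Gp_der.
  cbv beta; ring.
Qed.

Lemma r_bound n t : 0 <= t <= PI / 2 ->
  0 <= r (S n) (PI / 2) - r (S n) t <= e n (PI / 2) * (1 - sin t).
Proof.
  intros Ht. split.
  - assert (H := cmp (fun _ => 0) (r (S n)) (fun _ => 0) _ t (PI / 2) (proj2 Ht)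
      (fun x _ => der_const 0 x) (fun x _ => r_der (S n) x)).
    cbv beta in H. enough (0 - 0 <= r (S n) (PI / 2) - r (S n) t) by lra.
    apply H. intros x Hx. assert (0 <= cos x) by (apply cos_ge_0; lra).
    assert (Hb := e_bounds n x ltac:(lra)). assert (He : e n x = x - A (S n) (sin x)) by reflexivity. nra.
  - assert (H := cmp (r (S n)) (fun x => e n (PI / 2) * sin x) _ (fun x => e n (PI / 2) * cos x)
       t (PI / 2) (proj2 Ht) (fun x _ => r_der (S n) x)).
    cbv beta in H. rewrite sin_PI2 in H.
    enough (r (S n) (PI / 2) - r (S n) t <= e n (PI / 2) * 1 - e n (PI / 2) * sin t) by lra.
    apply H.
    + intros x _. apply is_derive_scal. apply der_sin.
    + intros x Hx. assert (0 <= cos x) by (apply cos_ge_0; lra).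
      assert (Hb := e_bounds n x ltac:(lra)). assert (He : e n x = x - A (S n) (sin x)) by reflexivity. nra.
Qed.

Lemma m1sq M : (-1) ^ M * (-1) ^ M = 1.
Proof. induction M. simpl; ring. simpl. nra. Qed.

Lemma cos_pos_h x : 0 <= x <= PI / 4 -> 0 < cos x.
Proof. intros. apply cos_gt_0; assert (PI > 0) by apply PI_RGT_0; lra. Qed.

Lemma tan_nonneg x : 0 <= x <= PI / 4 -> 0 <= tan x.
Proof.
  intros Hx. assert (H := cos_pos_h x Hx). unfold tan.
  apply Rmult_le_pos. apply sin_ge_0; assert (PI > 0) by apply PI_RGT_0; lra.
  left. apply Rinv_0_lt_compat; auto.
Qed.

Lemma Pp_zero M : Pp M 0 = 0.
Proof. rewrite Pp_pa. ring. Qed.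

Lemma Gbound M h : 0 <= h <= PI / 4 ->
  0 <= (-1) ^ M * (h - Pp M (tan h)) <= tan h ^ (2 * M + 1) / INR (2 * M + 1).
Proof.
  intros Hh.
  assert (Hd : forall x, 0 <= x <= h -> is_derive (fun y => (-1) ^ M * (y - Pp M (tan y))) x (tan x ^ (2 * M))).
  { intros x Hx. eapply is_derive_eq. apply is_derive_scal. apply der_minus. apply der_id.
    apply (der_comp (Pp M) tan). apply Pp_der. apply is_derive_tan.
    assert (0 < cos x) by (apply cos_pos_h; lra). lra.
    assert (H := pg_id M (tan x)).
    replace ((tan x ^ 2 + 1) * pg M (tan x)) with ((1 + tan x ^ 2) * pg M (tan x)) by ring.
    rewrite H. replace ((-1) ^ M * (1 - (1 - (-1) ^ M * tan x ^ (2 * M))))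
      with (((-1) ^ M * (-1) ^ M) * tan x ^ (2 * M)) by ring.
    rewrite m1sq. ring. }
  assert (Hz : (-1) ^ M * (0 - Pp M (tan 0)) = 0) by (rewrite tan_0, Pp_zero; ring).
  split.
  - assert (H := cmp (fun _ => 0) (fun y => (-1) ^ M * (y - Pp M (tan y))) (fun _ => 0) _ 0 h (proj1 Hh)
      (fun x _ => der_const 0 x) Hd).
    cbv beta in H. rewrite Hz in H.
    enough (0 - 0 <= (-1) ^ M * (h - Pp M (tan h)) - 0) by lra.
    apply H. intros x Hx. rewrite pow_mult. apply pow_le. nra.
  - assert (H := cmp (fun y => (-1) ^ M * (y - Pp M (tan y))) (fun y => tan y ^ (2 * M + 1) / INR (2 * M + 1))
      _ (fun x => (tan x ^ 2 + 1) * tan x ^ (2 * M)) 0 h (proj1 Hh) Hd).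
    cbv beta in H. rewrite Hz, tan_0, pow_i in H by lia.
    enough ((-1) ^ M * (h - Pp M (tan h)) - 0 <= tan h ^ (2 * M + 1) / INR (2 * M + 1) - 0 / INR (2 * M + 1)) by (unfold Rdiv in *; lra).
    apply H.
    + intros x Hx.
      apply (der_ext (fun y => (fun z => 1 * z ^ (2 * M + 1) / INR (2 * M + 1)) (tan y))).
      { intros t; cbv beta; unfold Rdiv; ring. }
      eapply is_derive_eq. apply (der_comp (fun z => 1 * z ^ (2 * M + 1) / INR (2 * M + 1)) tan x (1 * (INR (2 * M + 1) * tan x ^ pred (2 * M + 1)) / INR (2 * M + 1)) (tan x ^ 2 + 1)).
      apply (der_mono' 1 (INR (2 * M + 1)) (2 * M + 1) (tan x)). apply is_derive_tan.
      assert (0 < cos x) by (apply cos_pos_h; lra). lra.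
      replace (pred (2 * M + 1)) with (2 * M)%nat by lia.
      assert (Hp := INR21_pos M). field. lra.
    + intros x Hx. rewrite pow_mult. assert (0 <= (tan x ^ 2) ^ M) by (apply pow_le; nra).
      assert (0 <= tan x ^ 2) by nra. nra.
Qed.

Definition hh t := (PI / 2 - t) / 2.
Definition PhiE t := PI * (sin t - ln (1 + sin t)) + 4 * cos t - (PI - 2 * t) * sin t.
Definition E t := PI * sin t * cos t / (1 + sin t) - 2 * sin t - (PI - 2 * t) * cos t.
Definition DD n M t := F (S n) (sin t) - PhiE t + 4 * pk M (tan (hh t)).
Definition Dd n M t := cos t * Fd (S n) (sin t) - E t - 2 * (tan (hh t) ^ 2 + 1) * pa M (tan (hh t)).

Lemma PhiE_der (t : R) : 0 <= t <= PI / 2 -> is_derive PhiE t (E t).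
Proof.
  intros Ht. assert (0 <= sin t) by (apply sin_ge_0; lra).
  unfold PhiE, E. auto_derive.
  - lra.
  - field. lra.
Qed.

Lemma hh_range t : 0 <= t <= PI / 2 -> 0 <= hh t <= PI / 4.
Proof. unfold hh. lra. Qed.

Lemma D_der n M (t : R) : 0 <= t <= PI / 2 -> is_derive (DD n M) t (Dd n M t).
Proof.
  intros Ht.
  assert (Hc : 0 < cos (hh t)) by (apply cos_pos_h, hh_range; auto).
  eapply is_derive_eq. apply der_plus. apply der_minus.
  apply (der_sin_comp (F (S n)) (Fd (S n))). apply F_der.
  apply PhiE_der; auto.
  apply is_derive_scal. apply (der_comp (pk M) (fun y => tan (hh y)) t (pa M (tan (hh t))) (- / 2 * (tan (hh t) ^ 2 + 1))).
  apply pk_der.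
  eapply is_derive_eq. apply (der_comp tan hh t (tan (hh t) ^ 2 + 1) (- / 2)).
  apply is_derive_tan. lra.
  unfold hh. auto_derive. auto. field. ring.
  unfold Dd. field.
Qed.

Lemma Dd_bound n M t : 0 < t < PI / 2 ->
  Rabs (Dd n M t) <= 2 * e n (PI / 2) + 4 / INR (2 * M + 1).
Proof.
  intros Ht.
  assert (HPI : PI > 0) by apply PI_RGT_0.
  set (s := sin t). set (co := cos t). set (h := hh t).
  set (sh := sin h). set (ch := cos h). set (T := tan h).
  assert (Hs : 0 < s) by (apply sin_gt_0; lra).
  assert (Hco : 0 < co) by (apply cos_gt_0; lra).
  assert (Hsc : co * co = 1 - s ^ 2) by apply sc2.
  assert (Hh : 0 < h < PI / 4) by (unfold h, hh; lra).
  assert (Hsh : 0 < sh) by (apply sin_gt_0; lra).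
  assert (Hch : 0 < ch) by (apply cos_pos_h; lra).
  assert (Hshc : ch * ch = 1 - sh ^ 2) by apply sc2.
  assert (H2h : PI / 2 - t = 2 * h) by (unfold h, hh; lra).
  assert (Hco2 : co = 2 * sh * ch).
  { unfold co, sh, ch. rewrite <- sin_2a, <- H2h, sin_shift. reflexivity. }
  assert (Hs2 : s = ch * ch - sh * sh).
  { unfold s, sh, ch. rewrite <- cos_2a, <- H2h, cos_shift. reflexivity. }
  assert (HT : T = sh / ch) by reflexivity.
  assert (Hshch : sh <= ch) by nra.
  assert (HT0 : 0 < T) by (rewrite HT; apply Rdiv_lt_0_compat; auto).
  assert (HT1 : T <= 1) by (rewrite HT; unfold Rdiv; apply (Rmult_le_reg_r ch); auto; rewrite Rmult_assoc, Rinv_l by lra; lra).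
  set (B := Gp (S n) 1). set (g := Gp (S n) s).
  assert (HF := F_id (S n) s). fold B g in HF.
  assert (H1 : co * Fd (S n) s = 2 * s * (B - g) / co).
  { rewrite <- HF, <- Hsc. field. lra. }
  assert (H2 : E t = 2 * s * (PI / 2 - co - t * s) / co - 2 * h / (sh * ch)).
  { unfold E. fold s co.
    assert (Hcs : co / (1 + s) = (1 - s) / co).
    { field_simplify_eq; try lra; try nra. }
    replace (PI * s * co / (1 + s)) with (PI * s * (co / (1 + s))) by (field; lra).
    rewrite Hcs. replace (2 * h / (sh * ch)) with (4 * h / co) by (rewrite Hco2; field; lra).
    replace (4 * h) with (2 * (PI / 2 - t)) by lra.
    field_simplify_eq; try lra; try nra. }
  assert (H3 : 2 * (T ^ 2 + 1) * pa M T = 2 * Pp M T / (sh * ch)).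
  { rewrite Pp_pa. set (P := pa M T).
    replace (T ^ 2 + 1) with (/ (ch * ch)). rewrite HT. field. lra.
    rewrite HT. field_simplify_eq. 2: lra. nra. }
  assert (Hr := r_bound n t ltac:(lra)).
  assert (Hrp : r (S n) (PI / 2) = PI / 2 - 1 - B) by (unfold r, B; rewrite cos_PI2, sin_PI2; ring).
  assert (Hrt : r (S n) t = co + t * s - 1 - g) by reflexivity.
  rewrite Hrp, Hrt in Hr. fold s in Hr.
  set (al := e n (PI / 2)) in *.
  assert (Hal : 0 <= al) by (apply (e_bounds n (PI/2)); lra).
  assert (HG := Gbound M h ltac:(lra)). fold T in HG.
  set (K := (-1) ^ M * (h - Pp M T)) in HG.
  assert (HK : Rabs (h - Pp M T) = Rabs K) by (unfold K; rewrite Rabs_mult, pow_1_abs; ring).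
  assert (HD : Dd n M t = 2 * s * (co + t * s - g - PI / 2 + B) / co + 2 * (h - Pp M T) / (sh * ch)).
  { unfold Dd. fold s co h T. rewrite H1, H2, H3. field. lra. }
  rewrite HD.
  eapply Rle_trans. apply Rabs_triang. apply Rplus_le_compat.
  -
    assert (Hsq : s * (1 - s) <= co) by nra.
    apply Rabs_le. split.
    + apply (Rmult_le_reg_r co); auto.
      replace (2 * s * (co + t * s - g - PI / 2 + B) / co * co) with (2 * s * (co + t * s - g - PI / 2 + B)) by (field; lra).
      nra.
    + apply (Rmult_le_reg_r co); auto.
      replace (2 * s * (co + t * s - g - PI / 2 + B) / co * co) with (2 * s * (co + t * s - g - PI / 2 + B)) by (field; lra).
      nra.
  -
    assert (HTp : T ^ (2 * M) <= 1) by (rewrite <- (pow1 (2 * M)); apply pow_incr; lra).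
    assert (HTp0 : 0 <= T ^ (2 * M)) by (apply pow_le; lra).
    assert (HI := INR21_pos M).
    replace (2 * (h - Pp M T) / (sh * ch)) with (2 / (sh * ch) * (h - Pp M T)) by (field; lra).
    rewrite Rabs_mult, HK, Rabs_right by (apply Rle_ge, Rdiv_le_0_compat; nra).
    rewrite Rabs_right by lra.
    apply Rle_trans with (2 / (sh * ch) * (T ^ (2 * M + 1) / INR (2 * M + 1))).
    { apply Rmult_le_compat_l. apply Rdiv_le_0_compat; nra. lra. }
    rewrite pow_add, pow_1.
    assert (HTc : T * ch = sh) by (rewrite HT; field; lra).
    assert (Hch2 : ch * ch >= 1 / 2) by nra.
    apply (Rmult_le_reg_r (sh * ch * ch * INR (2 * M + 1))). apply Rmult_lt_0_compat; nra.
    replace (2 / (sh * ch) * (T ^ (2 * M) * T / INR (2 * M + 1)) * (sh * ch * ch * INR (2 * M + 1)))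
      with (2 * T ^ (2 * M) * (T * ch)) by (field; repeat split; lra).
    rewrite HTc.
    replace (4 / INR (2 * M + 1) * (sh * ch * ch * INR (2 * M + 1))) with (4 * sh * (ch * ch)) by (field; lra).
    nra.
Qed.

Lemma main_bound n M : Rabs (F (S n) 1 - PI * (1 - ln 2) + 4 - 4 * pk M 1)
  <= (2 * c n + 4 / INR (2 * M + 1)) * (PI / 2).
Proof.
  assert (HPI : PI > 0) by apply PI_RGT_0.
  assert (H := bnd (DD n M) (Dd n M) 0 (PI / 2) (2 * e n (PI / 2) + 4 / INR (2 * M + 1)) ltac:(lra)
    (fun t Ht => D_der n M t Ht) (fun t Ht => Dd_bound n M t Ht)).
  assert (Ha := alpha_le n).
  assert (HD1 : DD n M (PI / 2) = F (S n) 1 - PI * (1 - ln 2)).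
  { unfold DD, PhiE, hh. rewrite sin_PI2, cos_PI2.
    replace ((PI / 2 - PI / 2) / 2) with 0 by field. rewrite tan_0, pk_zero.
    assert (Hl2 : ln (1 + 1) = ln 2) by (f_equal; ring). rewrite Hl2. field. }
  assert (HD0 : DD n M 0 = - 4 + 4 * pk M 1).
  { unfold DD, PhiE, hh. rewrite sin_0, cos_0, F_zero.
    replace ((PI / 2 - 0) / 2) with (PI / 4) by field. rewrite tan_PI4.
    replace (1 + 0) with 1 by ring. rewrite ln_1. ring. }
  rewrite HD1, HD0 in H. replace (PI / 2 - 0) with (PI / 2) in H by ring.
  replace (F (S n) 1 - PI * (1 - ln 2) + 4 - 4 * pk M 1) with
    (F (S n) 1 - PI * (1 - ln 2) - (-4 + 4 * pk M 1)) by ring.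
  eapply Rle_trans. apply H.
  apply Rmult_le_compat_r; lra.
Qed.

Lemma catalan_ex : ex_series catalan_term.
Proof.
  set (Un := fun n => / INR (2 * n + 1) ^ 2).
  assert (Hinv : is_lim_seq (fun n => / INR (2 * n + 1)) 0).
  { replace (Finite 0) with (Rbar_inv p_infty) by reflexivity.
    apply is_lim_seq_inv; [|discriminate].
    apply (is_lim_seq_le_p_loc INR). exists O. intros k _. apply le_INR. lia.
    apply is_lim_seq_INR. }
  destruct (alternated_series Un) as [l Hl].
  - intros k. unfold Un. apply Rinv_le_contravar.
    assert (H := INR21_pos k). nra.
    apply pow_incr. split. left; apply INR21_pos. apply le_INR. lia.
  - apply is_lim_seq_Reals.
    apply (is_lim_seq_ext (fun n => / INR (2 * n + 1) * / INR (2 * n + 1))).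
    { intros k. unfold Un. assert (H := INR21_pos k). field. lra. }
    replace 0 with (0 * 0) by ring. apply is_lim_seq_mult'; auto.
  - exists l. apply is_series_Reals. exact Hl.
Qed.

Lemma inv_lim : is_lim_seq (fun n => / INR (2 * n + 1)) 0.
Proof.
  replace (Finite 0) with (Rbar_inv p_infty) by reflexivity.
  apply is_lim_seq_inv; [|discriminate].
  apply (is_lim_seq_le_p_loc INR). exists O. intros k _. apply le_INR. lia.
  apply is_lim_seq_INR.
Qed.

Lemma c_lim : is_lim_seq c 0.
Proof.
  assert (H2 : is_lim_seq (fun n => c n ^ 2) 0).
  { apply (is_lim_seq_le_le (fun _ => 0) _ (fun n => / INR (2 * n + 1))).
    - intros k. split. apply pow_le. left; apply c_pos.
      assert (H := c_sq k). assert (Hi := INR21_pos k).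
      apply (Rmult_le_reg_r (INR (2 * k + 1))); auto. rewrite Rinv_l; lra.
    - apply is_lim_seq_const.
    - apply inv_lim. }
  assert (H := is_lim_seq_continuous sqrt _ 0 (continuity_pt_sqrt 0 (Rle_refl 0)) H2).
  rewrite sqrt_0 in H.
  apply (is_lim_seq_ext (fun n => sqrt (c n ^ 2))); auto.
  intros k. apply sqrt_pow2. left; apply c_pos.
Qed.

Theorem mainTheorem8 :
  is_series (fun k : nat => main_term (S k)) (PI * (1 - ln 2) - 4 * (1 - Catalan)).
Proof.
  assert (Hcat : is_lim_seq (sum_n catalan_term) Catalan).
  { apply (Series_correct _ catalan_ex). }
  set (w := fun n => (2 * c n + 4 / INR (2 * S n + 1)) * (PI / 2) + 4 * Rabs (sum_n catalan_term n - Catalan)).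
  assert (Hw : is_lim_seq w 0).
  { unfold w. replace 0 with ((2 * 0 + 4 * 0) * (PI / 2) + 4 * 0) by ring.
    apply is_lim_seq_plus'. apply is_lim_seq_mult'. apply is_lim_seq_plus'.
    apply is_lim_seq_mult'. apply is_lim_seq_const. apply c_lim.
    apply is_lim_seq_mult'. apply is_lim_seq_const.
    apply (is_lim_seq_incr_1 (fun n => / INR (2 * n + 1))). apply inv_lim.
    apply is_lim_seq_const.
    apply is_lim_seq_mult'. apply is_lim_seq_const.
    apply (proj1 (is_lim_seq_abs_0 (fun n => sum_n catalan_term n - Catalan))).
    replace 0 with (Catalan - Catalan) by ring.
    apply is_lim_seq_minus'. auto. apply is_lim_seq_const. }
  set (V := PI * (1 - ln 2) - 4 * (1 - Catalan)).
  assert (Hb : forall n, Rabs (sum_n (fun k => main_term (S k)) n - V) <= w n).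
  { intros n. assert (H := main_bound n (S n)). rewrite F_one, pk_one in H.
    unfold w, V.
    replace (sum_n (fun k => main_term (S k)) n - (PI * (1 - ln 2) - 4 * (1 - Catalan)))
      with ((sum_n (fun k => main_term (S k)) n - PI * (1 - ln 2) + 4 - 4 * sum_n catalan_term n)
            + 4 * (sum_n catalan_term n - Catalan)) by ring.
    eapply Rle_trans. apply Rabs_triang. apply Rplus_le_compat. exact H.
    rewrite Rabs_mult, (Rabs_right 4) by lra. lra. }
  assert (Hl : is_lim_seq (sum_n (fun k => main_term (S k))) V).
  { apply (is_lim_seq_le_le (fun n => V - w n) _ (fun n => V + w n)).
    - intros n. specialize (Hb n). apply Rabs_le_between in Hb. lra.
    - replace (Finite V) with (Finite (V - 0)) by (f_equal; ring).
      apply is_lim_seq_minus'. apply is_lim_seq_const. auto.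
    - replace (Finite V) with (Finite (V + 0)) by (f_equal; ring).
      apply is_lim_seq_plus'. apply is_lim_seq_const. auto. }
  exact Hl.
Qed.
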